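(* Let $\bar A=\{A_i\}$ be a partition with $A_i\in(P_i,Q_i)$ for all $i$, and fix $j$. (i) If $x\in[A_j,Q_j)$ and $T_{j-1}(x)\in(P_{\theta(j-1)},A_{\theta(j-1)}]$, then $T_{\theta(j-1)-1}T_{j-1}(x)\in(x,P_{j+1})$. (ii) If $x\in(P_j,A_j]$ and $T_j(x)\in[A_{\rho(j)+1},Q_{\rho(j)+1})$, then $T_{\rho(j)+1}T_j(x)\in(Q_{j-1},x)$.
   Context: Setting. Fix $g\ge 2$; indices are mod $8g-4$. Let $\mathcal F$ be the regular hyperbolic $(8g-4)$-gon in the unit disk centered at $0$ with all interior angles $\pi/2$, sides labeled $1,\dots,8g-4$ counterclockwise, side $i$ joining vertices $V_i$ and $V_{i+1}$. The complete geodesic extending side $i$ goes from $P_i$ (beyond $V_i$) to $Q_{i+1}$ (beyond $V_{i+1}$) on the unit circle; counterclockwise order $P_1,Q_1,P_2,Q_2,\dots,P_{8g-4},Q_{8g-4}$. $\sigma(i)=4g-i$ ($i$ odd), $\sigma(i)=2-i$ ($i$ even), $\rho(i)=\sigma(i)+1$, $\theta(i)=\sigma(i)-1$. $T_i$ is the Möbius transformation mapping side $i$ onto side $\sigma(i)$, with isometric circle the geodesic $P_iQ_{i+1}$, mapped onto the geodesic $Q_{\sigma(i)+1}P_{\sigma(i)}$, inside to outside. Arcs $[A,B)$, $(A,B]$, $(A,B)$ are counterclockwise from $A$ to $B$. *)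

(* Defs.v *)
From Stdlib Require Import Reals ZArith.
From Coquelicot Require Import Coquelicot.
Open Scope R_scope.

(** Number of sides N = 8g - 4. Indices are integers, read mod N. *)
Definition NN (g : Z) : Z := (8 * g - 4)%Z.

(** sigma, rho, theta (defined on all integers; parity is well defined mod N
    since N is even, and all formulas are compatible with reduction mod N). *)
Definition sigma (g i : Z) : Z := if Z.odd i then (4 * g - i)%Z else (2 - i)%Z.
Definition rho (g i : Z) : Z := (sigma g i + 1)%Z.
Definition theta (g i : Z) : Z := (sigma g i - 1)%Z.

Definition expi (a : R) : Complex.C := (cos a, sin a).

Definition ccw (a b : R) : R :=
  (b - a) - 2 * PI * IZR (Int_part ((b - a) / (2 * PI))).

Definition arc_oo (a b : R) (z : Complex.C) : Prop :=
  exists s, 0 < s /\ s < ccw a b /\ z = expi (a + s).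
Definition arc_co (a b : R) (z : Complex.C) : Prop :=
  exists s, 0 <= s /\ s < ccw a b /\ z = expi (a + s).
Definition arc_oc (a b : R) (z : Complex.C) : Prop :=
  exists s, 0 < s /\ s <= ccw a b /\ z = expi (a + s).

(** Geometry of the regular N-gon with interior angles pi/2 centered at 0,
    rotated by an arbitrary angle [rot].  The geodesic extending side i is
    symmetric about the direction phi_i = rot + 2 pi i / N and has endpoints
    e^{i(phi_i - alpha)} = P_i and e^{i(phi_i + alpha)} = Q_{i+1}, where the
    half-aperture alpha in (0, pi/2) is determined by orthogonality of
    adjacent geodesics: cos^2 alpha = cos(2 pi / N). *)
Definition phi (rot : R) (g i : Z) : R := rot + 2 * PI * IZR i / IZR (NN g).
Definition alpha (g : Z) : R := atan (sqrt (/ cos (2 * PI / IZR (NN g)) - 1)).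
Definition Pang (rot : R) (g i : Z) : R := phi rot g i - alpha g.
Definition Qang (rot : R) (g i : Z) : R := phi rot g (i - 1) + alpha g.

(** The geodesic with endpoints e^{-i alpha}, e^{i alpha} meets the real axis
    at tpt = sec alpha - tan alpha.  [halfturn] is the hyperbolic rotation by
    pi about tpt (m_t is the involutive disk automorphism swapping 0 and t). *)
Definition tpt (g : Z) : R := (1 - sin (alpha g)) / cos (alpha g).
Definition mob_t (t : R) (z : Complex.C) : Complex.C :=
  Cdiv (Cminus (RtoC t) z) (Cminus (RtoC 1) (Cmult (RtoC t) z)).
Definition halfturn (t : R) (z : Complex.C) : Complex.C :=
  mob_t t (Copp (mob_t t z)).

(** T_i: the orientation-preserving Moebius transformation of the disk mapping
    side i onto side sigma(i), with P_i |-> Q_{sigma(i)+1},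
    Q_{i+1} |-> P_{sigma(i)}, inside of the isometric circle P_i Q_{i+1} to
    the outside of Q_{sigma(i)+1} P_{sigma(i)}. *)
Definition Tmap (rot : R) (g i : Z) (z : Complex.C) : Complex.C :=
  Cmult (expi (phi rot g (sigma g i)))
        (halfturn (tpt g) (Cmult (expi (- phi rot g i)) z)).

(* Main.v *)
Require Import Defs.
From Stdlib Require Import Reals ZArith.
From Coquelicot Require Import Coquelicot.
From Stdlib Require Import Lra Lia.
Open Scope R_scope.

Lemma expi_per (a : R) (m : Z) : expi (a + 2 * PI * IZR m) = expi a.
Proof.
  unfold expi.
  destruct (Z_le_gt_dec 0 m) as [H|H].
  - rewrite <- (Z2Nat.id m H), <- INR_IZR_INZ.
    replace (2 * PI * INR (Z.to_nat m)) with (2 * INR (Z.to_nat m) * PI) by ring.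
    now rewrite cos_period, sin_period.
  - assert (E : a = (a + 2 * PI * IZR m) + 2 * INR (Z.to_nat (- m)) * PI).
    { rewrite INR_IZR_INZ, Z2Nat.id by lia. rewrite opp_IZR. ring. }
    rewrite E at 3 4. now rewrite cos_period, sin_period.
Qed.

Lemma expi_add (a b : R) : Cmult (expi a) (expi b) = expi (a + b).
Proof.
  unfold expi, Cmult; simpl. rewrite cos_plus, sin_plus. f_equal; ring.
Qed.

Lemma Int_part_0 (r : R) : 0 <= r < 1 -> Int_part r = 0%Z.
Proof. intros. symmetry. apply Int_part_spec. simpl. lra. Qed.

Lemma ccw_char (a b v : R) (m : Z) :
  0 <= v < 2 * PI -> b - a = v + 2 * PI * IZR m -> ccw a b = v.
Proof.
  intros Hv E. unfold ccw. pose proof PI_RGT_0.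
  assert (Int_part ((b - a) / (2 * PI)) = m) as ->.
  { symmetry. apply Int_part_spec. rewrite E.
    replace ((v + 2 * PI * IZR m) / (2 * PI)) with (v / (2*PI) + IZR m) by (field; lra).
    assert (0 <= v / (2 * PI) < 1).
    { split. apply Rdiv_le_0_compat; lra. apply Rmult_lt_reg_r with (2*PI). lra.
      unfold Rdiv. rewrite Rmult_assoc, Rinv_l by lra. lra. }
    lra. }
  lra.
Qed.

Lemma expi_eq (a b : R) : expi a = expi b -> exists m : Z, b = a + 2 * PI * IZR m.
Proof.
  intros E. unfold expi in E. injection E as E1 E2.
  pose proof PI_RGT_0.
  set (r := b - a).
  set (m := Int_part (r / (2 * PI))).
  destruct (base_Int_part (r / (2 * PI))) as [B1 B2]. fold m in B1, B2.
  set (r' := r - 2 * PI * IZR m).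
  assert (Hr' : 0 <= r' < 2 * PI).
  { unfold r'. split.
    - assert (IZR m * (2 * PI) <= r).
      { apply Rmult_le_compat_r with (r := 2 * PI) in B1; [|lra].
        unfold Rdiv in B1. rewrite Rmult_assoc, Rinv_l, Rmult_1_r in B1 by lra. exact B1. }
      lra.
    - assert (r - 2 * PI < IZR m * (2 * PI)).
      { assert (r / (2 * PI) - 1 < IZR m) by lra.
        apply Rmult_lt_compat_r with (r := 2 * PI) in H0; [|lra].
        unfold Rdiv in H0. rewrite Rmult_minus_distr_r, Rmult_assoc, Rinv_l, Rmult_1_r in H0 by lra. lra. }
      lra. }
  assert (Hc : cos r' = 1 /\ sin r' = 0).
  { assert (expi r' = expi r) as Er.
    { unfold r'. rewrite <- (expi_per (r - 2 * PI * IZR m) m). f_equal. ring. }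
    unfold expi in Er. injection Er as Er1 Er2. rewrite Er1, Er2. unfold r.
    rewrite cos_minus, sin_minus, E1, E2. pose proof (sin2_cos2 b). unfold Rsqr in H0.
    split; nra. }
  destruct Hc as [Hc Hs].
  destruct (sin_eq_O_2PI_0 r') as [H0|[H0|H0]]; try lra.
  - exists m. unfold r', r in H0. lra.
  - rewrite H0, cos_PI in Hc. lra.
Qed.

Lemma expi_win (a b : R) : expi a = expi b -> - (2 * PI) < b - a < 2 * PI -> a = b.
Proof.
  intros E H. destruct (expi_eq a b E) as [m Hm]. pose proof PI_RGT_0.
  assert (-1 < IZR m < 1).
  { split.
    - apply Rmult_lt_reg_l with (2 * PI). lra. nra.
    - apply Rmult_lt_reg_l with (2 * PI). lra. nra. }
  destruct H1 as [H1 H2]. apply lt_IZR in H1. apply lt_IZR in H2.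
  assert (m = 0%Z) by lia. subst m. simpl in Hm. lra.
Qed.

Definition hh (g : Z) : R := 2 * PI / IZR (NN g).

Lemma consts (g : Z) : (2 <= g)%Z ->
  0 < hh g /\ hh g <= PI / 6 /\ 0 < alpha g /\ alpha g < hh g /\ hh g < 2 * alpha g
  /\ cos (alpha g) * cos (alpha g) = cos (hh g) /\ 0 < cos (alpha g) < 1
  /\ alpha g < PI / 2 /\ 0 < sin (alpha g).
Proof.
  intros Hg. pose proof PI_RGT_0 as Hpi.
  assert (HN : 12 <= IZR (NN g)) by (unfold NN; apply IZR_le; lia).
  assert (Hh0 : 0 < hh g) by (unfold hh; apply Rdiv_lt_0_compat; lra).
  assert (Hh1 : hh g <= PI / 6).
  { unfold hh. apply Rmult_le_reg_r with (IZR (NN g)). lra.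
    unfold Rdiv. rewrite Rmult_assoc, Rinv_l, Rmult_1_r by lra. nra. }
  set (h := hh g) in *.
  set (C := cos h).
  assert (HC0 : 0 < C) by (apply cos_gt_0; lra).
  assert (HC1 : C < 1) by (rewrite <- cos_0; apply cos_decreasing_1; lra).
  assert (HX : 0 < / C - 1).
  { assert (1 < / C). { rewrite <- Rinv_1. apply Rinv_lt_contravar; lra. } lra. }
  set (X := sqrt (/ C - 1)).
  assert (HX0 : 0 < X) by (apply sqrt_lt_R0; lra).
  assert (HXX : X * X = / C - 1) by (apply sqrt_sqrt; lra).
  assert (Hca : cos (alpha g) = sqrt C).
  { unfold alpha. change (2 * PI / IZR (NN g)) with h. fold C. fold X. rewrite cos_atan. unfold Rsqr. rewrite HXX.
    replace (1 + (/ C - 1)) with (/ C) by ring. rewrite sqrt_inv. field.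
    apply Rgt_not_eq, sqrt_lt_R0. lra. }
  pose proof (sqrt_lt_R0 C HC0) as Hs0. pose proof (sqrt_sqrt C (Rlt_le _ _ HC0)) as Hss.
  assert (Hs1 : sqrt C < 1) by nra.
  assert (Ha0 : 0 < alpha g).
  { unfold alpha. change (2 * PI / IZR (NN g)) with h. fold C X. rewrite <- atan_0. apply atan_increasing. lra. }
  assert (Ha1 : alpha g < PI / 2).
  { destruct (atan_bound (sqrt (/ cos (2 * PI / IZR (NN g)) - 1))). unfold alpha. lra. }
  assert (Hah : alpha g < h).
  { apply cos_decreasing_0; try lra. rewrite Hca. fold C. nra. }
  assert (Hh2 : h < 2 * alpha g).
  { assert (h / 2 < alpha g); [|lra].
    apply cos_decreasing_0; try lra.
    assert (Ec : C = 2 * cos (h/2) * cos (h/2) - 1).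
    { unfold C. rewrite <- cos_2a_cos. f_equal. field. }
    assert (0 < cos (h/2)) by (apply cos_gt_0; lra).
    rewrite Hca. nra. }
  clear -Hca Hss Hs0 Hs1 Ha0 Ha1 Hah Hh2 Hh0 Hh1 Hpi. repeat split; try lra.
  all: try (rewrite Hca; assumption).
  all: try (apply sin_gt_0; lra).
Qed.

Lemma C_ht (t c : R) (z : C) :
  Cminus (RtoC 1) (Cmult (RtoC t) z) <> RtoC 0 ->
  Cminus (RtoC (1 + t * t)) (Cmult (RtoC (2 * t)) z) <> RtoC 0 ->
  Cminus (RtoC 1) (Cmult (RtoC c) z) <> RtoC 0 ->
  1 + t * t <> 0 -> c * (1 + t * t) = 2 * t ->
  halfturn t z = Cdiv (Cminus (RtoC c) z) (Cminus (RtoC 1) (Cmult (RtoC c) z)).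
Proof.
  intros H1 H2 H3 H4 H5. unfold halfturn, mob_t.
  assert (E1 : RtoC (1 + t * t) = (RtoC 1 + RtoC t * RtoC t)%C) by (unfold RtoC, Cplus, Cmult; simpl; f_equal; ring).
  assert (E2 : RtoC (2 * t) = (RtoC 2 * RtoC t)%C) by (unfold RtoC, Cmult; simpl; f_equal; ring).
  assert (E3 : RtoC c = (RtoC (2 * t) / RtoC (1 + t * t))%C).
  { rewrite <- H5. unfold RtoC, Cdiv, Cinv, Cmult; simpl. f_equal; field; auto. }
  assert (H4' : RtoC (1 + t * t) <> RtoC 0).
  { intro E. injection E. auto. }
  rewrite E3. rewrite E3 in H3. rewrite E1, E2 in *.
  field. repeat split; auto.
Qed.

Definition KK (g : Z) : R := (1 + cos (alpha g)) / (1 - cos (alpha g)).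
Definition Gf (g : Z) (th : R) : R := PI + 2 * atan (KK g * tan (th / 2)).

Lemma cos2atan v : cos (2 * atan v) = (1 - v * v) / (1 + v * v).
Proof.
  rewrite cos_2a, cos_atan, sin_atan. unfold Rsqr.
  assert (0 < 1 + v * v) by nra.
  pose proof (sqrt_lt_R0 _ H). pose proof (sqrt_sqrt _ (Rlt_le _ _ H)).
  set (q := sqrt (1 + v * v)) in *. rewrite <- H1. field. lra.
Qed.

Lemma sin2atan v : sin (2 * atan v) = 2 * v / (1 + v * v).
Proof.
  rewrite sin_2a, cos_atan, sin_atan. unfold Rsqr.
  assert (0 < 1 + v * v) by nra.
  pose proof (sqrt_lt_R0 _ H). pose proof (sqrt_sqrt _ (Rlt_le _ _ H)).
  set (q := sqrt (1 + v * v)) in *. rewrite <- H1. field. lra.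
Qed.

Lemma cos_half th : - PI < th < PI ->
  cos th = (1 - tan (th/2) * tan (th/2)) / (1 + tan (th/2) * tan (th/2)) /\
  sin th = 2 * tan (th/2) / (1 + tan (th/2) * tan (th/2)).
Proof.
  intros H. assert (0 < cos (th/2)) by (apply cos_gt_0; lra).
  pose proof (sin2_cos2 (th/2)). unfold Rsqr in H1.
  assert (E : cos th = cos (2*(th/2)) /\ sin th = sin (2*(th/2))) by (split; f_equal; field).
  rewrite (proj1 E), (proj2 E), cos_2a, sin_2a. unfold tan. split; field_simplify; try lra;
  rewrite ?(Rplus_comm (cos (th/2) ^ 2)); replace (sin (th / 2) ^ 2 + cos (th / 2) ^ 2) with 1 by (simpl; lra); field; lra.
Qed.

Lemma ne0 (r x y : R) : x * x + y * y = 1 -> -1 < r < 1 ->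
  Cminus (RtoC 1) (Cmult (RtoC r) (x, y)) <> RtoC 0.
Proof.
  intros H1 H2 E. unfold Cminus, Cmult, RtoC, Cplus, Copp in E; simpl in E.
  injection E as E1 E2. nra.
Qed.

Lemma cdiv_eq (a b e : C) : b <> RtoC 0 -> a = Cmult e b -> Cdiv a b = e.
Proof. intros H ->. field. auto. Qed.

Lemma H_circ (g : Z) (th : R) : (2 <= g)%Z -> - PI < th < PI ->
  halfturn (tpt g) (expi th) = expi (Gf g th).
Proof.
  intros Hg Hth. destruct (consts g Hg) as (_&_&Ha0&_&_&Hcc&Hc&Ha1&Hs).
  set (c := cos (alpha g)) in *. set (s := sin (alpha g)) in *.
  assert (Hsc : s * s + c * c = 1) by (pose proof (sin2_cos2 (alpha g)); unfold Rsqr in H; unfold s, c; lra).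
  set (t := tpt g).
  assert (Ht : t = (1 - s) / c) by reflexivity.
  assert (Hs1 : s < 1) by nra.
  assert (Ht0 : 0 < t) by (rewrite Ht; apply Rdiv_lt_0_compat; lra).
  assert (Ht1 : t < 1).
  { rewrite Ht. apply Rmult_lt_reg_r with c. lra. unfold Rdiv. rewrite Rmult_assoc, Rinv_l by lra. nra. }
  assert (Hct : c * (1 + t * t) = 2 * t).
  { rewrite Ht. field_simplify; try lra. replace (c ^ 2) with (1 - s * s) by (simpl; lra). field. lra. }
  pose proof (sin2_cos2 th) as Hxy. unfold Rsqr in Hxy.
  unfold expi at 1. rewrite C_ht with (c := c); try nra.
  2:{ apply ne0; lra. }
  2:{ intro E. unfold Cminus, Cmult, RtoC, Cplus, Copp in E; simpl in E. injection E as E1 E2.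
      assert (cos th <= 1) by (pose proof (COS_bound th); lra).
      assert (0 <= t * (1 - cos th)) by (apply Rmult_le_pos; lra). nra. }
  2:{ apply ne0; lra. }
  apply cdiv_eq. { apply ne0; lra. }
  destruct (cos_half th Hth) as [Ec Es].
  unfold Gf, expi. rewrite (Rplus_comm PI), neg_cos, neg_sin, cos2atan, sin2atan.
  fold c. unfold KK. fold c. rewrite Ec, Es.
  set (u := tan (th / 2)).
  unfold Cminus, Cmult, RtoC, Cplus, Copp; simpl.
  assert (0 < 1 + u * u) by nra.
  assert (0 < 1 + (1 + c) / (1 - c) * u * ((1 + c) / (1 - c) * u)) by nra.
  f_equal; field; repeat split. all: try lra. all: assert (0 < (1-c)*(1-c)) by nra; nra.
Qed.

Lemma Tmap_circ rot g i y : (2 <= g)%Z -> - PI < y - phi rot g i < PI ->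
  Tmap rot g i (expi y) = expi (phi rot g (Defs.sigma g i) + Gf g (y - phi rot g i)).
Proof.
  intros Hg H. unfold Tmap. rewrite expi_add.
  replace (- phi rot g i + y) with (y - phi rot g i) by ring.
  rewrite H_circ by auto. apply expi_add.
Qed.

Lemma KK_pos g : (2 <= g)%Z -> 0 < KK g.
Proof.
  intros Hg. destruct (consts g Hg) as (_&_&_&_&_&_&Hc&_). unfold KK.
  apply Rdiv_lt_0_compat; lra.
Qed.

Lemma Gf_range g th : 0 < Gf g th < 2 * PI.
Proof. unfold Gf. pose proof (atan_bound (KK g * tan (th / 2))). lra. Qed.

Lemma Gf_incr g a b : (2 <= g)%Z -> - PI < a -> a < b -> b < PI -> Gf g a < Gf g b.
Proof.
  intros Hg H1 H2 H3. unfold Gf. pose proof (KK_pos g Hg).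
  assert (tan (a/2) < tan (b/2)) by (apply tan_increasing; lra).
  assert (atan (KK g * tan (a / 2)) < atan (KK g * tan (b / 2))) by (apply atan_increasing; nra).
  lra.
Qed.

Lemma Gf_neg g th : Gf g (- th) = 2 * PI - Gf g th.
Proof.
  unfold Gf. replace (- th / 2) with (- (th / 2)) by field.
  rewrite tan_neg. replace (KK g * - tan (th / 2)) with (- (KK g * tan (th / 2))) by ring.
  rewrite atan_opp. ring.
Qed.

Lemma Gf_alpha g : (2 <= g)%Z -> Gf g (alpha g) = 2 * PI - alpha g.
Proof.
  intros Hg. destruct (consts g Hg) as (_&Hh6&Ha0&_&_&_&Hc&Ha1&_).
  set (a := alpha g) in *.
  assert (Hcos : 0 < cos (a/2)) by (apply cos_gt_0; lra).
  assert (Hsin : 0 < sin (a/2)) by (apply sin_gt_0; lra).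
  assert (Ec1 : cos a = 2 * cos (a/2) * cos (a/2) - 1) by (rewrite <- cos_2a_cos; f_equal; field).
  assert (Ec2 : cos a = 1 - 2 * sin (a/2) * sin (a/2)) by (rewrite <- cos_2a_sin; f_equal; field).
  assert (E : KK g * tan (a / 2) = / tan (a / 2)).
  { unfold KK, tan. fold a.
    assert (0 < 1 - cos a) by (rewrite Ec2; nra).
    assert (0 < 1 + cos a) by (rewrite Ec1; nra).
    apply Rmult_eq_reg_r with ((1 - cos a) * sin (a/2) * cos (a/2)).
    2: { apply Rgt_not_eq. apply Rmult_lt_0_compat; [apply Rmult_lt_0_compat|]; lra. }
    field_simplify; try lra.
    rewrite Ec1 at 1. rewrite Ec2. ring. }
  unfold Gf. rewrite E, atan_inv.
  - rewrite atan_tan by lra. field.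
  - unfold tan. apply Rdiv_lt_0_compat; lra.
Qed.

Lemma key g th : (2 <= g)%Z -> hh g - alpha g < th < alpha g ->
  Gf g th > th + 2 * PI - 2 * hh g.
Proof.
  intros Hg Hth. destruct (consts g Hg) as (Hh0&Hh6&Ha0&Hah&H2a&Hcc&Hc&Ha1&_).
  set (a := alpha g) in *. set (h := hh g) in *. set (c := cos a) in *.
  pose proof PI_RGT_0.
  set (x := th / 2). set (y := h - x).
  assert (Hx : 0 < x < PI / 2) by (unfold x; lra).
  assert (Hy : 0 < y < PI / 2) by (unfold y, x; lra).
  set (b := th / 2 + PI / 2 - h).
  assert (Hb : b = PI / 2 - y) by (unfold b, y, x; ring).
  assert (Htb : tan b = cos y / sin y).
  { unfold tan. rewrite Hb, sin_shift, cos_shift. reflexivity. }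
  assert (Hcy : 0 < cos y) by (apply cos_gt_0; lra).
  assert (Hsy : 0 < sin y) by (apply sin_gt_0; lra).
  assert (Hcx : 0 < cos x) by (apply cos_gt_0; lra).
  assert (Hsx : 0 < sin x) by (apply sin_gt_0; lra).
  assert (HD : cos (x - y) > c).
  { replace (x - y) with (- (h - th)) by (unfold y, x; field). rewrite cos_neg.
    unfold c. apply cos_decreasing_1; lra. }
  assert (Hsum : cos (x + y) = c * c).
  { rewrite Hcc. f_equal. unfold y. ring. }
  rewrite cos_minus in HD. rewrite cos_plus in Hsum.
  assert (Hineq : KK g * tan x > tan b).
  { rewrite Htb. unfold KK, tan. change (cos (alpha g)) with c.
    apply Rlt_0_minus.
    replace ((1 + c) / (1 - c) * (sin x / cos x) - cos y / sin y)
      with (((1 + c) * sin x * sin y - (1 - c) * cos x * cos y) / ((1 - c) * cos x * sin y))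
      by (field; repeat split; lra).
    apply Rdiv_lt_0_compat.
    - nra.
    - apply Rmult_lt_0_compat; [apply Rmult_lt_0_compat|]; lra. }
  unfold Gf. fold x.
  assert (atan (tan b) < atan (KK g * tan x)) by (apply atan_increasing; lra).
  rewrite atan_tan in H0.
  - unfold b in H0. lra.
  - unfold b. lra.
Qed.

Lemma key' g th : (2 <= g)%Z -> - alpha g < th < alpha g - hh g ->
  Gf g th < th + 2 * hh g.
Proof.
  intros Hg Hth. pose proof (key g (- th) Hg ltac:(lra)). rewrite Gf_neg in H. lra.
Qed.

Lemma phi_rel rot g a b : (2 <= g)%Z -> phi rot g a = phi rot g b + IZR (a - b) * hh g.
Proof.
  intros Hg. unfold phi, hh. rewrite minus_IZR.
  assert (IZR (NN g) <> 0) by (unfold NN; apply not_0_IZR; lia). field. auto.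
Qed.

Lemma odd4 g k : Z.odd (4 * g - k) = Z.odd k.
Proof.
  rewrite Z.odd_sub. replace (4 * g)%Z with (2 * (2 * g))%Z by ring.
  rewrite Z.odd_mul. simpl. destruct (Z.odd k); reflexivity.
Qed.

Lemma odd2 k : Z.odd (2 - k) = Z.odd k.
Proof. rewrite Z.odd_sub. simpl. destruct (Z.odd k); reflexivity. Qed.

Lemma oddm2 k : Z.odd (k - 2) = Z.odd k.
Proof. rewrite Z.odd_sub. simpl. destruct (Z.odd k); reflexivity. Qed.

Lemma oddp2 k : Z.odd (k + 2) = Z.odd k.
Proof. rewrite Z.odd_add. simpl. destruct (Z.odd k); reflexivity. Qed.

Lemma sig1 g k : Defs.sigma g (Defs.sigma g k - 1 - 1) = (k + 2)%Z.
Proof.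
  unfold Defs.sigma. replace (_ - 1 - 1)%Z with ((if Z.odd k then 4 * g - k else 2 - k) - 2)%Z by lia.
  destruct (Z.odd k) eqn:E.
  - rewrite oddm2, odd4, E. lia.
  - rewrite oddm2, odd2, E. lia.
Qed.

Lemma sig2 g k : Defs.sigma g (Defs.sigma g k + 1 + 1) = (k - 2)%Z.
Proof.
  unfold Defs.sigma. replace (_ + 1 + 1)%Z with ((if Z.odd k then 4 * g - k else 2 - k) + 2)%Z by lia.
  destruct (Z.odd k) eqn:E.
  - rewrite oddp2, odd4, E. lia.
  - rewrite oddp2, odd2, E. lia.
Qed.

Lemma unpackA P Q A : 0 < Q - P < 2 * PI -> arc_oo P Q (expi A) ->
  exists s0 m, 0 < s0 < Q - P /\ A = P + s0 + 2 * PI * IZR m.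
Proof.
  intros HPQ (s & H1 & H2 & H3).
  rewrite (ccw_char P Q (Q - P) 0) in H2 by (try lra; simpl; ring).
  destruct (expi_eq _ _ (eq_sym H3)) as [m Hm]. exists s, m. split; lra.
Qed.

Lemma expi_shift a b (m : Z) : a = b + 2 * PI * IZR m -> expi a = expi b.
Proof. intros ->. apply expi_per. Qed.

Lemma part1 (g : Z) (rot : R) (A : Z -> R) (j : Z) (x : R) :
  (2 <= g)%Z ->
  (forall i : Z, arc_oo (Pang rot g i) (Qang rot g i) (expi (A i))) ->
  (arc_co (A j) (Qang rot g j) (expi x) ->
   arc_oc (Pang rot g (theta g (j - 1)%Z)%Z) (A (theta g (j - 1)%Z)%Z)
          (Tmap rot g (j - 1)%Z (expi x)) ->
   arc_oo x (Pang rot g (j + 1)%Z)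
          (Tmap rot g (theta g (j - 1)%Z - 1) (Tmap rot g (j - 1)%Z (expi x)))).
Proof.
  intros Hg HA Hx Hy.
  destruct (consts g Hg) as (Hh0&Hh6&Ha0&Hah&H2a&Hcc&Hc&Ha1&_).
  pose proof PI_RGT_0 as Hpi.
  set (h := hh g) in *. set (al := alpha g) in *.
  set (pj := phi rot g j).
  assert (HPQ : forall i, Qang rot g i - Pang rot g i = 2 * al - h).
  { intro i. unfold Qang, Pang. rewrite (phi_rel rot g (i - 1) i) by auto.
    replace (i - 1 - i)%Z with (-1)%Z by lia. simpl. fold h al. ring. }
  destruct (unpackA _ _ _ (ltac:(rewrite HPQ; lra)) (HA j)) as (s0 & m & Hs0 & HAj).
  rewrite HPQ in Hs0.
  destruct Hx as (s & Hs1 & Hs2 & Hs3).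
  rewrite (ccw_char (A j) (Qang rot g j) (2 * al - h - s0) (- m)) in Hs2.
  2: lra.
  2: { rewrite HAj. pose proof (HPQ j). rewrite opp_IZR. lra. }
  destruct (expi_eq _ _ (eq_sym Hs3)) as [m2 Hm2].
  set (a := - al + s0 + s).
  assert (Ha : - al < a < al - h) by (unfold a; lra).
  assert (Hxa : x = pj + a + 2 * PI * IZR (m + m2)).
  { rewrite Hm2, HAj, plus_IZR. unfold a, pj, Pang. fold al. ring. }
  assert (Ex : expi x = expi (pj + a)) by (apply (expi_shift _ _ (m + m2)); exact Hxa).
  rewrite Ex in Hy |- *.
  set (S := Defs.sigma g (j - 1)).
  assert (Hpj : pj = phi rot g (j - 1) + h).
  { unfold pj. rewrite (phi_rel rot g j (j - 1)) by auto. replace (j - (j - 1))%Z with 1%Z by lia. simpl. fold h. ring. }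
  rewrite Tmap_circ in Hy |- * by (auto; rewrite Hpj; lra).
  fold S in Hy |- *.
  replace (pj + a - phi rot g (j - 1)) with (a + h) in Hy |- * by (rewrite Hpj; ring).
  set (psi1 := Gf g (a + h)) in *.
  unfold theta in Hy |- *. fold S in Hy |- *.
  destruct (unpackA _ _ _ (ltac:(rewrite HPQ; lra)) (HA (S - 1)%Z)) as (s0' & m' & Hs0' & HAS).
  rewrite HPQ in Hs0'.
  destruct Hy as (t & Ht1 & Ht2 & Ht3).
  rewrite (ccw_char _ _ s0' m') in Ht2 by (try lra; rewrite HAS; ring).
  destruct (expi_eq _ _ (eq_sym Ht3)) as [m3 Hm3].
  assert (HPS : Pang rot g (S - 1) = phi rot g S - h - al).
  { unfold Pang. rewrite (phi_rel rot g (S - 1) S) by auto. replace (S - 1 - S)%Z with (-1)%Z by lia. simpl. fold h al. ring. }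
  rewrite HPS in Hm3.
  pose proof (Gf_range g (a + h)) as Hr1. fold psi1 in Hr1.
  assert (m3 = 1%Z).
  { assert (0 < IZR m3 < 2).
    { split.
      - apply Rmult_lt_reg_l with (2 * PI); lra.
      - apply Rmult_lt_reg_l with (2 * PI); lra. }
    destruct H as [H1 H2]. apply lt_IZR in H1. apply lt_IZR in H2. lia. }
  subst m3. simpl in Hm3.
  assert (Hpsi1 : psi1 = 2 * PI - h - al + t) by lra.
  set (th2 := psi1 + 2 * h - 2 * PI).
  assert (Hth2d : th2 = psi1 + 2 * h - 2 * PI) by reflexivity.
  assert (Hth2 : h - al < th2 < al) by (unfold th2; lra).
  assert (E2 : expi (phi rot g S + psi1) = expi (phi rot g (S - 1 - 1) + th2)).
  { apply (expi_shift _ _ 1). rewrite (phi_rel rot g S (S - 1 - 1)) by auto.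
    replace (S - (S - 1 - 1))%Z with 2%Z by lia. unfold th2. simpl. fold h. ring. }
  rewrite E2.
  rewrite Tmap_circ by (auto; lra).
  replace (phi rot g (S - 1 - 1) + th2 - phi rot g (S - 1 - 1)) with th2 by ring.
  unfold S. rewrite sig1. replace (j - 1 + 2)%Z with (j + 1)%Z by lia.
  pose proof (key g (a + h) Hg ltac:(fold h al; lra)) as K1. fold h psi1 in K1.
  pose proof (key g th2 Hg ltac:(fold h al; lra)) as K2. fold h in K2.
  assert (U : Gf g th2 < 2 * PI - al).
  { pose proof (Gf_alpha g Hg) as GA. fold al in GA. rewrite <- GA. apply Gf_incr; auto; lra. }
  assert (Hpj1 : phi rot g (j + 1) = pj + h).
  { unfold pj. rewrite (phi_rel rot g (j + 1) j) by auto. replace (j + 1 - j)%Z with 1%Z by lia. simpl. fold h. ring. }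
  set (b := h + Gf g th2 - 2 * PI).
  exists (b - a). split; [|split].
  - unfold b. lra.
  - rewrite (ccw_char _ _ (h - al - a) (- (m + m2))).
    + unfold b. lra.
    + lra.
    + unfold Pang. rewrite Hpj1, Hxa, opp_IZR. fold al. ring.
  - apply (expi_shift _ _ (1 - (m + m2))). rewrite Hxa, Hpj1, minus_IZR. unfold b. simpl. ring.
Qed.

Lemma part2 (g : Z) (rot : R) (A : Z -> R) (j : Z) (x : R) :
  (2 <= g)%Z ->
  (forall i : Z, arc_oo (Pang rot g i) (Qang rot g i) (expi (A i))) ->
  (arc_oc (Pang rot g j) (A j) (expi x) ->
   arc_co (A (rho g j + 1)%Z) (Qang rot g (rho g j + 1)%Z) (Tmap rot g j (expi x)) ->
   arc_oo (Qang rot g (j - 1)%Z) x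
          (Tmap rot g (rho g j + 1)%Z (Tmap rot g j (expi x)))).
Proof.
  intros Hg HA Hx Hy.
  destruct (consts g Hg) as (Hh0&Hh6&Ha0&Hah&H2a&Hcc&Hc&Ha1&_).
  pose proof PI_RGT_0 as Hpi.
  set (h := hh g) in *. set (al := alpha g) in *.
  set (pj := phi rot g j).
  assert (HPQ : forall i, Qang rot g i - Pang rot g i = 2 * al - h).
  { intro i. unfold Qang, Pang. rewrite (phi_rel rot g (i - 1) i) by auto.
    replace (i - 1 - i)%Z with (-1)%Z by lia. simpl. fold h al. ring. }
  destruct (unpackA _ _ _ (ltac:(rewrite HPQ; lra)) (HA j)) as (s0 & m & Hs0 & HAj).
  rewrite HPQ in Hs0.
  destruct Hx as (s & Hs1 & Hs2 & Hs3).
  rewrite (ccw_char _ _ s0 m) in Hs2 by (try lra; rewrite HAj; ring).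
  destruct (expi_eq _ _ (eq_sym Hs3)) as [m2 Hm2].
  set (a := - al + s).
  assert (Ha : - al < a < al - h) by (unfold a; lra).
  assert (Hxa : x = pj + a + 2 * PI * IZR m2).
  { rewrite Hm2. unfold a, pj, Pang. fold al. ring. }
  assert (Ex : expi x = expi (pj + a)) by (apply (expi_shift _ _ m2); exact Hxa).
  rewrite Ex in Hy |- *.
  set (S := Defs.sigma g j).
  rewrite Tmap_circ in Hy |- * by (auto; unfold pj; lra).
  fold S in Hy |- *.
  replace (pj + a - phi rot g j) with a in Hy |- * by (unfold pj; ring).
  set (psi1 := Gf g a) in *.
  assert (ER : (rho g j + 1 = S + 1 + 1)%Z) by (unfold rho; fold S; lia).
  rewrite ER in Hy |- *.
  destruct (unpackA _ _ _ (ltac:(rewrite HPQ; lra)) (HA (S + 1 + 1)%Z)) as (s0' & m' & Hs0' & HAS).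
  rewrite HPQ in Hs0'.
  destruct Hy as (t & Ht1 & Ht2 & Ht3).
  rewrite (ccw_char _ _ (2 * al - h - s0') (- m')) in Ht2.
  2: lra.
  2: { rewrite HAS. pose proof (HPQ (S + 1 + 1)%Z). rewrite opp_IZR. lra. }
  destruct (expi_eq _ _ (eq_sym Ht3)) as [m3 Hm3].
  assert (HPS : Pang rot g (S + 1 + 1) = phi rot g S + 2 * h - al).
  { unfold Pang. rewrite (phi_rel rot g (S + 1 + 1) S) by auto. replace (S + 1 + 1 - S)%Z with 2%Z by lia. simpl. fold h al. ring. }
  rewrite HAS, HPS in Hm3.
  pose proof (Gf_range g a) as Hr1. fold psi1 in Hr1.
  assert (Hk : (m' + m3 = 0)%Z).
  { assert (-1 < IZR (m' + m3) < 1).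
    { rewrite plus_IZR. split.
      - apply Rmult_lt_reg_l with (2 * PI); lra.
      - apply Rmult_lt_reg_l with (2 * PI); lra. }
    destruct H as [H1 H2]. apply lt_IZR in H1. apply lt_IZR in H2. lia. }
  assert (Hpsi1 : psi1 = 2 * h - al + s0' + t).
  { assert (IZR m3 = - IZR m') by (rewrite <- opp_IZR; f_equal; lia). rewrite H in Hm3. lra. }
  set (th2 := psi1 - 2 * h).
  assert (Hth2d : th2 = psi1 - 2 * h) by reflexivity.
  assert (Hth2 : - al < th2 < al - h) by lra.
  assert (E2 : expi (phi rot g S + psi1) = expi (phi rot g (S + 1 + 1) + th2)).
  { apply (expi_shift _ _ 0). rewrite (phi_rel rot g (S + 1 + 1) S) by auto.
    replace (S + 1 + 1 - S)%Z with 2%Z by lia. unfold th2. simpl. fold h. ring. }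
  rewrite E2.
  rewrite Tmap_circ by (auto; lra).
  replace (phi rot g (S + 1 + 1) + th2 - phi rot g (S + 1 + 1)) with th2 by ring.
  unfold S. rewrite sig2.
  pose proof (key' g a Hg ltac:(fold h al; lra)) as K1. fold h psi1 in K1.
  pose proof (key' g th2 Hg ltac:(fold h al; lra)) as K2. fold h in K2.
  assert (U : al < Gf g th2).
  { pose proof (Gf_alpha g Hg) as GA. pose proof (Gf_neg g al) as GN. fold al in GA, GN.
    assert (Gf g (- al) = al) by lra. rewrite <- H. apply Gf_incr; auto; lra. }
  assert (Hpj2 : phi rot g (j - 2) = pj - 2 * h).
  { unfold pj. rewrite (phi_rel rot g (j - 2) j) by auto. replace (j - 2 - j)%Z with (-2)%Z by lia. simpl. fold h. ring. }
  exists (Gf g th2 - al). split; [|split].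
  - lra.
  - rewrite (ccw_char _ _ (a + 2 * h - al) m2).
    + lra.
    + lra.
    + unfold Qang. replace (j - 1 - 1)%Z with (j - 2)%Z by lia. rewrite Hpj2, Hxa. fold al. ring.
  - f_equal. unfold Qang. replace (j - 1 - 1)%Z with (j - 2)%Z by lia. fold al. ring.
Qed.

Theorem lemma3p6 (g : Z) (rot : R) (A : Z -> R) (j : Z) (x : R) :
  (2 <= g)%Z ->
  (forall i : Z, expi (A (i + NN g)%Z) = expi (A i)) ->
  (forall i : Z, arc_oo (Pang rot g i) (Qang rot g i) (expi (A i))) ->
  (arc_co (A j) (Qang rot g j) (expi x) ->
   arc_oc (Pang rot g (theta g (j - 1)%Z)%Z) (A (theta g (j - 1)%Z)%Z)
          (Tmap rot g (j - 1)%Z (expi x)) ->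
   arc_oo x (Pang rot g (j + 1)%Z)
          (Tmap rot g (theta g (j - 1)%Z - 1) (Tmap rot g (j - 1)%Z (expi x))))
  /\
  (arc_oc (Pang rot g j) (A j) (expi x) ->
   arc_co (A (rho g j + 1)%Z) (Qang rot g (rho g j + 1)%Z) (Tmap rot g j (expi x)) ->
   arc_oo (Qang rot g (j - 1)%Z) x
          (Tmap rot g (rho g j + 1)%Z (Tmap rot g j (expi x)))).
Proof.
  intros Hg _ HA. split.
  - apply part1; auto.
  - apply part2; auto.
Qed.
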